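(* Let $(\mathfrak J,B)$ be a pseudo-euclidean Jordan algebra and $\omega$ a bilinear form on $\mathfrak J$. Then $\omega$ is a symplectic form on $\mathfrak J$ if and only if there exists an invertible $B$-antisymmetric derivation $D$ of $\mathfrak J$ such that $\omega(x,y)=B(D(x),y)$ for all $x,y\in\mathfrak J$. In particular $\mathfrak J$ admits a symplectic form iff it admits an invertible $B$-antisymmetric derivation.
   Context: All algebras are finite-dimensional over a field of characteristic zero. A Jordan algebra is a commutative algebra with $x(yx^2)=(xy)x^2$; $(\mathfrak J,B)$ is pseudo-euclidean if $B$ is nondegenerate, symmetric, with $B(xy,z)=B(x,yz)$. A symplectic form on $\mathfrak J$ is a nondegenerate skew-symmetric bilinear form $\omega$ with $\omega(xy,z)+\omega(yz,x)+\omega(zx,y)=0$ for all $x,y,z$. $D$ is $B$-antisymmetric if $B(Dx,y)=-B(x,Dy)$; a derivation satisfies $D(xy)=D(x)y+xD(y)$. *)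

(* Defs.v *)
From HB Require Import structures.
From mathcomp Require Import all_boot all_order all_algebra.
Set Implicit Arguments. Unset Strict Implicit. Unset Printing Implicit Defensive.
Import GRing.Theory.
Local Open Scope ring_scope.

Section Defs.
Variables (F : fieldType) (V : vectType F).

Definition bilinear_prod (mul : V -> V -> V) : Prop :=
  (forall x, linear (mul x)) /\ (forall y, linear (fun x => mul x y)).

Definition bilinear_form (B : V -> V -> F) : Prop :=
  (forall x, linear (B x : V -> F^o)) /\ (forall y, linear ((fun x => B x y) : V -> F^o)).

Definition jordan (mul : V -> V -> V) : Prop :=
  (forall x y, mul x y = mul y x) /\
  (forall x y, mul x (mul y (mul x x)) = mul (mul x y) (mul x x)).

Definition nondegenerate (B : V -> V -> F) : Prop :=
  forall x, (forall y, B x y = 0) -> x = 0.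

Definition pseudo_euclidean (mul : V -> V -> V) (B : V -> V -> F) : Prop :=
  [/\ bilinear_form B, nondegenerate B,
      (forall x y, B x y = B y x) &
      (forall x y z, B (mul x y) z = B x (mul y z))].

Definition symplectic (mul : V -> V -> V) (w : V -> V -> F) : Prop :=
  [/\ nondegenerate w,
      (forall x y, w x y = - w y x) &
      (forall x y z, w (mul x y) z + w (mul y z) x + w (mul z x) y = 0)].

Definition B_antisymmetric (B : V -> V -> F) (D : V -> V) : Prop :=
  forall x y, B (D x) y = - B x (D y).

Definition derivation (mul : V -> V -> V) (D : V -> V) : Prop :=
  linear D /\ forall x y, D (mul x y) = mul (D x) y + mul x (D y).

End Defs.

(* Main.v *)
Require Import Defs.
From HB Require Import structures.
From mathcomp Require Import all_boot all_order all_algebra.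
Set Implicit Arguments. Unset Strict Implicit. Unset Printing Implicit Defensive.
Import GRing.Theory.
Local Open Scope ring_scope.

Definition mkLin (F : fieldType) (U W : lmodType F) (f : U -> W) (hf : linear f) : {linear U -> W} :=
  HB.pack f (GRing.isLinear.Build _ _ _ _ f hf).

Section Riesz.
Variables (F : fieldType) (V : vectType F) (B : V -> V -> F).
Hypotheses (hB : bilinear_form B) (hnd : Defs.nondegenerate B).

Lemma dimFo : dim (F^o) = 1%N. Proof. by []. Qed.
Lemma dimHom (U W : vectType F) : dim 'Hom(U, W) = (dim U * dim W)%N. Proof. by []. Qed.

Definition phiB (u : V) : 'Hom(V, F^o) := linfun (mkLin (hB.1 u)).

Lemma phiB_lin : linear phiB.
Proof.
move=> a u v; apply/lfunP => y.
rewrite !lfunE /= !lfunE /= !lfunE /=.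
exact: (hB.2 y).
Qed.

Definition PhiB : 'Hom(V, 'Hom(V, F^o)) := linfun (mkLin phiB_lin).

Lemma riesz (f : V -> F^o) : linear f -> exists v, forall y, B v y = f y.
Proof.
move=> hf.
have inj : injective PhiB.
  move=> u v; rewrite !lfunE /= => /lfunP => e.
  apply/eqP; rewrite -subr_eq0; apply/eqP; apply: hnd => y.
  have := e y; rewrite !lfunE /= => euv.
  have := hB.2 y (-1) v u; rewrite /= scaleN1r [- v + u]addrC => ->.
  by rewrite euv scaleN1r addNr.
have kr : lker PhiB == 0%VS by apply/lker0P.
have im : limg PhiB = fullv.
  apply/eqP; rewrite eqEdim subvf /= limg_dim_eq; last by rewrite (eqP kr) capv0.
  by rewrite !dimvf dimHom dimFo muln1.
have : linfun (mkLin hf) \in limg PhiB by rewrite im memvf.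
case/memv_imgP => v _ ev; exists v => y.
have := congr1 (fun g : 'Hom(V, F^o) => g y) ev.
by rewrite !lfunE /= ?lfunE.
Qed.

Lemma PhiBE (u y : V) : PhiB u y = B u y.
Proof. by rewrite !lfunE /= ?lfunE. Qed.

Lemma PhiB_full : limg PhiB = fullv.
Proof.
have inj : injective PhiB.
  move=> u v e.
  apply/eqP; rewrite -subr_eq0; apply/eqP; apply: hnd => y.
  have := congr1 (fun g : 'Hom(V, F^o) => g y) e; rewrite !PhiBE => euv.
  have := hB.2 y (-1) v u; rewrite /= scaleN1r [- v + u]addrC => ->.
  by rewrite euv scaleN1r addNr.
have kr : lker PhiB == 0%VS by apply/lker0P.
apply/eqP; rewrite eqEdim subvf /= limg_dim_eq; last by rewrite (eqP kr) capv0.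
by rewrite !dimvf dimHom dimFo muln1.
Qed.

Lemma rieszV (g : 'Hom(V, F^o)) y : B ((PhiB^-1)%VF g) y = g y.
Proof. by rewrite -PhiBE limg_lfunVK // PhiB_full memvf. Qed.

End Riesz.

Section Main.
Variables (F : fieldType) (V : vectType F) (mul : V -> V -> V) (B : V -> V -> F).
Hypotheses (hcomm : forall x y, mul x y = mul y x) (hpe : pseudo_euclidean mul B).

Let hB : bilinear_form B. Proof. by case: hpe. Qed.
Let hnd : Defs.nondegenerate B. Proof. by case: hpe. Qed.
Let hsym : forall x y, B x y = B y x. Proof. by case: hpe. Qed.
Let hinv : forall x y z, B (mul x y) z = B x (mul y z). Proof. by case: hpe. Qed.

Lemma BD1 p q z : B (p + q) z = B p z + B q z.
Proof. by have := hB.2 z 1 p q; rewrite /= !scale1r. Qed.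

Lemma BZ1 a p q z : B (a *: p + q) z = a * B p z + B q z.
Proof. exact: (hB.2 z a p q). Qed.

Lemma B_inj x y : (forall z, B x z = B y z) -> x = y.
Proof.
move=> e; apply/eqP; rewrite -subr_eq0; apply/eqP; apply: hnd => z.
have := BZ1 (-1) y x z; rewrite scaleN1r [- y + x]addrC => ->.
by rewrite e mulN1r addNr.
Qed.

Lemma Eexp p q x y z :
  B (mul p y + mul x q) z = B p (mul y z) + B q (mul z x).
Proof. by rewrite BD1 hinv (hcomm x q) hinv (hcomm x z). Qed.

Lemma forward (w : V -> V -> F) : bilinear_form w -> symplectic mul w ->
  exists D : V -> V,
    [/\ derivation mul D, bijective D, B_antisymmetric B D &
        forall x y, w x y = B (D x) y].
Proof.
move=> hw [wnd wsk wcy].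
pose D x := ((PhiB hB)^-1)%VF (linfun (mkLin (hw.1 x))).
have DE x y : B (D x) y = w x y by rewrite /D rieszV // lfunE.
have Dlin : linear D.
  move=> a u v; apply: B_inj => z.
  by rewrite DE BZ1 !DE; exact: (hw.2 z a u v).
have Dinj : injective D.
  move=> u v e; apply/eqP; rewrite -subr_eq0; apply/eqP; apply: wnd => z.
  have := hw.2 z (-1) v u; rewrite /= scaleN1r [- v + u]addrC => ->.
  by rewrite -!DE e scaleN1r addNr.
exists D; split.
- split => // x y; apply: B_inj => z.
  rewrite Eexp DE !DE.
  rewrite (wsk x (mul y z)) (wsk y (mul z x)); apply/eqP.
  by rewrite -subr_eq0 opprD !opprK addrA wcy.
- pose L := linfun (mkLin Dlin).
  have kr : lker L == 0%VS by apply/lker0P => u v; rewrite !lfunE; exact: Dinj.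
  exists (L^-1)%VF.
    by move=> x; have := lker0_lfunK kr x; rewrite lfunE.
  by move=> x; have := lker0_lfunVK kr x; rewrite lfunE.
- by move=> x y; rewrite DE wsk -DE hsym.
- by move=> x y; rewrite DE.
Qed.

Lemma backward (w : V -> V -> F) (D : V -> V) :
  derivation mul D -> bijective D -> B_antisymmetric B D ->
  (forall x y, w x y = B (D x) y) -> symplectic mul w.
Proof.
move=> [Dlin Dder] Dbij Das wE.
have D0 : D 0 = 0 by exact: (raddf0 (mkLin Dlin)).
have anti a b : B (D a) b = - B (D b) a by rewrite Das hsym.
have E x y z : B (D (mul x y)) z = B (D x) (mul y z) + B (D y) (mul z x)
  by rewrite Dder Eexp.
split.
- move=> x h; apply: (bij_inj Dbij); rewrite D0; apply: hnd => y.
  by rewrite -wE h.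
- by move=> x y; rewrite !wE anti.
- move=> x y z; rewrite !wE E (anti (mul y z)) (anti (mul z x)).
  by rewrite addrAC addrK subrr.
Qed.

End Main.

Theorem mainTheorem8 (F : fieldType) (V : vectType F)
  (mul : V -> V -> V) (B : V -> V -> F) :
  [pchar F] =i pred0 ->
  bilinear_prod mul -> jordan mul -> pseudo_euclidean mul B ->
  (forall w : V -> V -> F, bilinear_form w ->
     (symplectic mul w <->
      exists D : V -> V,
        [/\ derivation mul D, bijective D, B_antisymmetric B D &
            forall x y, w x y = B (D x) y]))
  /\
  ((exists w : V -> V -> F, bilinear_form w /\ symplectic mul w) <->
   (exists D : V -> V,
      [/\ derivation mul D, bijective D & B_antisymmetric B D])).
Proof.
move=> _ _ [hcomm _] hpe.
have hB : bilinear_form B by case: hpe.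
split.
  move=> w hw; split; first exact: forward.
  by case=> D [hD hb ha hwE]; exact: (backward hcomm hpe hD hb ha hwE).
split.
  case=> w [hw hs]; have [D [hD hb ha _]] := forward hcomm hpe hw hs.
  by exists D.
case=> D [hD hb ha]; exists (fun x y => B (D x) y); split.
  split; first by move=> x; exact: (hB.1 (D x)).
  move=> y a u v /=; rewrite (hD.1 a u v); exact: (hB.2 y).
exact: (backward hcomm hpe hD hb ha (fun x y => erefl)).
Qed.
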